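(* Let $1\le p\le q<\infty$ and $k\in\mathbb{N}$. Let $\mathsf{M}_{p,q}(k)$ denote the least constant such that for every $n\ge k$, every function $f:\{-1,1\}^n\to\mathbb{R}$ of degree at most $k$ satisfies $\|f\|_q\le \mathsf{M}_{p,q}(k)\|f\|_p$. Then $\mathsf{M}_{p,q}(k)$ is also the least constant such that for every $n\ge k$, every function $f:\{-1,1\}^n\to\mathbb{R}$ satisfies $$\inf_{g\in \mathscr{P}^n_{>k}} \|f-g\|_{p^\ast} \leq \mathsf{M}_{p,q}(k) \inf_{g\in \mathscr{P}^n_{>k}} \|f-g\|_{q^\ast},$$ where for $r\in[1,\infty]$ the conjugate exponent $r^\ast$ is defined by $\frac1{r^\ast}+\frac1r=1$.
   Context: Every $f:\{-1,1\}^n\to\mathbb{R}$ has a unique Fourier–Walsh expansion $f=\sum_{S\subseteq\{1,\dots,n\}}\widehat f(S)w_S$, where $w_S(x)=\prod_{i\in S}x_i$. $f$ has degree at most $k$ if $\widehat f(S)=0$ whenever $|S|>k$. The $k$-th tail space is $\mathscr{P}^n_{>k}=\{f:\{-1,1\}^n\to\mathbb{R}:\ \widehat f(S)=0 \text{ whenever } |S|\le k\}$. For $r\in[1,\infty]$, $\|\cdot\|_r$ denotes the $L_r$ norm on $\{-1,1\}^n$ with respect to the uniform probability measure. *)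

(* Defs.v *)
From mathcomp Require Import all_boot all_order all_algebra.
From mathcomp Require Import all_classical all_reals all_analysis.
Set Implicit Arguments. Unset Strict Implicit. Unset Printing Implicit Defensive.
Import Order.TTheory GRing.Theory Num.Theory.
Local Open Scope ring_scope.
Local Open Scope classical_set_scope.

Section Cube.
Variable R : realType.

(* The discrete cube {-1,1}^n: x i = true encodes x_i = -1, false encodes 1. *)
Definition cube (n : nat) := {ffun 'I_n -> bool}.

Definition chi (n : nat) (x : cube n) (i : 'I_n) : R := if x i then -1 else 1.

Definition walsh (n : nat) (S : {set 'I_n}) (x : cube n) : R :=
  \prod_(i in S) chi x i.

Definition expect (n : nat) (f : cube n -> R) : R :=
  (\sum_(x : cube n) f x) / (2 ^+ n).

Definition fourier (n : nat) (f : cube n -> R) (S : {set 'I_n}) : R :=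
  expect (fun x => f x * walsh S x).

Definition degree_le (k n : nat) (f : cube n -> R) : Prop :=
  forall S : {set 'I_n}, (k < #|S|)%N -> fourier f S = 0.

Definition tail_space (k n : nat) (f : cube n -> R) : Prop :=
  forall S : {set 'I_n}, (#|S| <= k)%N -> fourier f S = 0.

Definition cube_norm (n : nat) (r : \bar R) (f : cube n -> R) : R :=
  match r with
  | EFin r => powR (expect (fun x => powR `|f x| r)) r^-1
  | EPInf => \big[Num.max/0]_(x : cube n) `|f x|
  | ENInf => 0
  end.

(* conjugate exponent r^* with 1/r^* + 1/r = 1, for r in [1, oo) *)
Definition conj_exp (r : R) : \bar R :=
  if r == 1 then +oo%E else (r / (r - 1))%:E.

Definition dist_tail (n : nat) (r : \bar R) (k : nat) (f : cube n -> R) : R :=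
  inf [set cube_norm r (fun x => f x - g x) | g in @tail_space k n].

Definition is_least_const (P : R -> Prop) (M : R) : Prop :=
  P M /\ forall C, P C -> M <= C.

End Cube.

(* Main.v *)
Require Import Defs.
From mathcomp Require Import all_boot all_order all_algebra.
From mathcomp Require Import all_classical all_reals all_analysis.
From mathcomp Require Import ring lra.
Set Implicit Arguments. Unset Strict Implicit. Unset Printing Implicit Defensive.
Import Order.TTheory GRing.Theory Num.Theory.
Local Open Scope ring_scope.

Section Fourier.
Variable R : realType.
Variable n : nat.
Local Notation V := (cube n -> R).

Lemma sum_one : \sum_(x : cube n) (1 : R) = 2 ^+ n.
Proof.
by rewrite sumr_const card_ffun card_bool card_ord -natrX.
Qed.

Lemma pow2_gt0 : 0 < (2 : R) ^+ n.
Proof. by rewrite exprn_gt0. Qed.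

Lemma expectE (f : V) : expect f = (\sum_x f x) / 2 ^+ n.
Proof. by []. Qed.

Lemma expect_cst (c : R) : expect (fun _ : cube n => c) = c.
Proof.
rewrite /expect sumr_const card_ffun card_bool card_ord -[c *+ _]mulr_natr natrX.
by rewrite mulfK // gt_eqF // pow2_gt0.
Qed.

Lemma expectD (f g : V) : expect (fun x => f x + g x) = expect f + expect g.
Proof. by rewrite /expect big_split /= mulrDl. Qed.

Lemma expectZ (a : R) (f : V) : expect (fun x => a * f x) = a * expect f.
Proof. by rewrite /expect -mulr_sumr mulrA. Qed.

Lemma expectN (f : V) : expect (fun x => - f x) = - expect f.
Proof. by rewrite /expect sumrN mulNr. Qed.

Lemma expectB (f g : V) : expect (fun x => f x - g x) = expect f - expect g.
Proof. by rewrite expectD expectN. Qed.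

Lemma expect_le (f g : V) : (forall x, f x <= g x) -> expect f <= expect g.
Proof.
move=> fg; rewrite /expect ler_pM2r ?invr_gt0 ?pow2_gt0 //.
by apply: ler_sum => x _.
Qed.

Lemma expect_ge0 (f : V) : (forall x, 0 <= f x) -> 0 <= expect f.
Proof. by move=> f0; rewrite -(expect_cst 0); apply: expect_le. Qed.

Lemma expect_eq (f g : V) : f =1 g -> expect f = expect g.
Proof. by move=> fg; rewrite /expect; congr (_ / _); apply: eq_bigr. Qed.

Lemma expect_sum (I : finType) (F : I -> V) :
  expect (fun x => \sum_i F i x) = \sum_i expect (F i).
Proof.
rewrite /expect exchange_big /= mulr_suml; by [].
Qed.

Lemma expect_eq0 (f : V) : (forall x, 0 <= f x) -> expect f = 0 -> forall x, f x = 0.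
Proof.
move=> f0 e0 x; move: e0; rewrite /expect => /eqP; rewrite mulf_eq0 invr_eq0.
rewrite (gt_eqF pow2_gt0) orbF psumr_eq0; last by move=> i _; exact: f0.
by move/allP/(_ x (mem_index_enum _))/implyP/(_ isT)/eqP.
Qed.

Definition cf (b : bool) : R := if b then -1 else 1.

Lemma cf2 b : cf b * cf b = 1.
Proof. by case: b; rewrite /cf ?mulrNN mulr1. Qed.

Lemma walsh_orth (S T : {set 'I_n}) :
  expect (fun x => walsh R S x * walsh R T x) = (S == T)%:R.
Proof.
rewrite /expect.
have E x : walsh R S x * walsh R T x =
   \prod_i ((if i \in S then cf (x i) else 1) * (if i \in T then cf (x i) else 1)).
  by rewrite big_split /= /walsh -!big_mkcond.
under eq_bigr do rewrite E.
rewrite (_ : \sum_(x : cube n) _ = \prod_(i : 'I_n) \sum_(b : bool)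
   ((if i \in S then cf b else 1) * (if i \in T then cf b else 1))); last first.
  by rewrite bigA_distr_bigA.
have [->|neST] := eqVneq S T.
  have F i b : (if i \in T then cf b else 1) * (if i \in T then cf b else 1) = 1.
    by case: ifP; rewrite ?cf2 ?mulr1.
  under eq_bigr do under eq_bigr do rewrite F.
  rewrite /= prodr_const card_ord sumr_const card_bool -natrX.
  by rewrite divff // gt_eqF // pow2_gt0.
have [i Hi] : exists i, (i \in S) != (i \in T).
  case: (pselect (exists i, (i \in S) != (i \in T))) => // H; exfalso.
  move/negP: neST; apply; apply/eqP/setP => i; apply/eqP/negPn/negP => Hi.
  by apply: H; exists i.
rewrite (bigD1 i) //= big_bool /=.
move: Hi; rewrite /cf; case: (i \in S); case: (i \in T) => //= _.
  by rewrite !mulr1 addNr mul0r mul0r.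
by rewrite !mul1r addNr mul0r mul0r.
Qed.

Lemma walsh0 (x : cube n) : walsh R finset.set0 x = 1.
Proof. by rewrite /walsh big_set0. Qed.

Lemma walsh_kernel (x y : cube n) :
  \sum_(S : {set 'I_n}) walsh R S x * walsh R S y = (x == y)%:R * 2 ^+ n.
Proof.
have E S : walsh R S x * walsh R S y =
    \prod_i (if i \in S then chi R x i * chi R y i else 1).
  by rewrite /walsh -big_split /= big_mkcond.
under eq_bigr do rewrite E.
rewrite -(bigA_distr 1 +%R (fun i => chi R x i * chi R y i) (fun=> 1)) /=.
have [->|nxy] := eqVneq x y.
  have F i : chi R y i * chi R y i = 1 by rewrite /chi; case: (y i); rewrite ?mulrNN mulr1.
  under eq_bigr do rewrite F.
  by rewrite prodr_const card_ord mul1r.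
have [i Hi] : exists i, x i != y i.
  case: (pselect (exists i, x i != y i)) => // H; exfalso.
  move/negP: nxy; apply; apply/eqP/ffunP => i; apply/eqP/negPn/negP => Hi.
  by apply: H; exists i.
rewrite (bigD1 i) //= mul0r.
move: Hi; rewrite /chi; case: (x i); case: (y i) => //= _; by rewrite ?mulN1r ?mulr1 ?mul1r ?addNr ?mul0r.
Qed.

Lemma fourier_inv (f : V) y : f y = \sum_S fourier f S * walsh R S y.
Proof.
rewrite /fourier.
under eq_bigr do rewrite mulrC -expectZ.
rewrite -expect_sum.
rewrite (expect_eq (g := fun x => f x * ((x == y)%:R * 2 ^+ n))); last first.
  move=> x /=; rewrite -walsh_kernel mulr_sumr; apply: eq_bigr => S _.
  by rewrite mulrCA [walsh R S y * _]mulrC.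
rewrite /expect (bigD1 y) //= big1; last first.
  by move=> x /negbTE ->; rewrite mul0r mulr0.
by rewrite eqxx mul1r addr0 mulfK // gt_eqF // pow2_gt0.
Qed.

Lemma deg_tail_orth k (f t : V) : degree_le k f -> tail_space k t ->
  expect (fun x => f x * t x) = 0.
Proof.
move=> df tt.
rewrite (expect_eq (g := fun x => \sum_S fourier f S * (walsh R S x * t x))); last first.
  by move=> x; rewrite {1}fourier_inv mulr_suml; apply: eq_bigr => S _; rewrite mulrA.
rewrite expect_sum big1 // => S _.
rewrite expectZ.
case: (leqP #|S| k) => hS; last by rewrite df // mul0r.
have := tt S hS; rewrite /fourier.
rewrite (expect_eq (f := fun x => t x * walsh R S x) (g := fun x => walsh R S x * t x)) => [->|x]; [by rewrite mulr0 | by rewrite mulrC].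
Qed.

Lemma walsh_tail k (S : {set 'I_n}) : (k < #|S|)%N -> tail_space k (walsh R S).
Proof.
move=> hS T hT; rewrite /fourier walsh_orth.
case: eqP => // ST; subst; move: hS; rewrite ltnNge hT //.
Qed.

Lemma one_deg k : degree_le k (fun _ : cube n => (1 : R)).
Proof.
move=> S hS; rewrite /fourier.
rewrite (expect_eq (g := fun x => walsh R S x * walsh R finset.set0 x)); last first.
  by move=> x; rewrite walsh0 mul1r mulr1.
rewrite walsh_orth; case: eqP => // S0; subst; by rewrite cards0 in hS.
Qed.

Lemma tail_expect k (t : V) : tail_space k t -> expect t = 0.
Proof.
move=> tt; have := tt finset.set0; rewrite cards0 => /(_ isT).
by rewrite /fourier (expect_eq (g := t)) // => x; rewrite walsh0 mulr1.
Qed.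

Lemma fourierD (f g : V) S : fourier (fun x => f x + g x) S = fourier f S + fourier g S.
Proof. by rewrite /fourier -expectD; apply: expect_eq => x; rewrite mulrDl. Qed.

Lemma fourierZ (a : R) (f : V) S : fourier (fun x => a * f x) S = a * fourier f S.
Proof. by rewrite /fourier -expectZ; apply: expect_eq => x; rewrite mulrA. Qed.

Lemma tail0 k : tail_space k (fun _ : cube n => (0:R)).
Proof.
move=> S _; rewrite /fourier (expect_eq (g := fun _ => 0)) ?expect_cst // => x; by rewrite mul0r.
Qed.

Lemma tail_lin k (a : R) (t u : V) : tail_space k t -> tail_space k u ->
  tail_space k (fun x => a * t x + u x).
Proof.
move=> tt tu S hS; rewrite fourierD fourierZ tt // tu //.
by rewrite mulr0 addr0.
Qed.

End Fourier.

Section Norms.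
Variable R : realType.
Variable n : nat.
Local Notation V := (cube n -> R).

Definition pn (r : R) (f : V) : R := powR (expect (fun x => powR `|f x| r)) r^-1.
Definition mn (f : V) : R := \big[Num.max/0]_x `|f x|.

Lemma pn_ge0 r f : 0 <= pn r f.
Proof. exact: powR_ge0. Qed.

Lemma mn_ge0 f : 0 <= mn f.
Proof.
apply: le_trans (le_bigmax _ _ [ffun=> false]); exact: normr_ge0.
Qed.

Lemma mn_ub f x : `|f x| <= mn f.
Proof. exact: le_bigmax. Qed.

Lemma pnX r f : 0 < r -> powR (pn r f) r = expect (fun x => powR `|f x| r).
Proof.
move=> r0; rewrite /pn -powRrM mulVf ?gt_eqF // powRr1 //.
by apply: expect_ge0 => x; exact: powR_ge0.
Qed.

Lemma pn_eq0 r f : 0 < r -> pn r f = 0 -> forall x, f x = 0.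
Proof.
move=> r0 /powR_eq0_eq0 E x.
have := expect_eq0 (f := fun x => powR `|f x| r) (fun x => powR_ge0 _ _) E x.
by move/powR_eq0_eq0/normr0_eq0.
Qed.

Lemma powRV (A b : R) : 0 <= A -> powR (A^-1) b = (powR A b)^-1.
Proof. by move=> A0; rewrite -powR_inv1 // -powRrM mulN1r powRN. Qed.

Lemma pn_le r (f g : V) : 0 < r -> (forall x, `|f x| <= `|g x|) -> pn r f <= pn r g.
Proof.
move=> r0 fg; rewrite /pn; apply: ge0_ler_powR; first by rewrite invr_ge0 ltW.
- by rewrite nnegrE; apply: expect_ge0 => x; exact: powR_ge0.
- by rewrite nnegrE; apply: expect_ge0 => x; exact: powR_ge0.
apply: expect_le => x; apply: ge0_ler_powR; rewrite ?nnegrE //; exact: ltW.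
Qed.

Lemma pn_cst0 r : 0 < r -> pn r (fun _ => 0) = 0.
Proof.
move=> r0; rewrite /pn (expect_eq (g := fun _ => 0)) ?expect_cst ?powR0 //.
  by rewrite invr_neq0 // gt_eqF.
by move=> x; rewrite normr0 powR0 // gt_eqF.
Qed.

Lemma pn_cst1 r : pn r (fun _ => 1) = 1.
Proof.
rewrite /pn (expect_eq (g := fun _ => 1)) ?expect_cst ?powR1 //.
by move=> x; rewrite normr1 powR1.
Qed.

Lemma conj_ab (a b : R) : 0 < a -> 0 < b -> a^-1 + b^-1 = 1 -> (a - 1) * b = a.
Proof.
move=> a0 b0 H.
have e : a + b = a * b * (a^-1 + b^-1) by field; rewrite !gt_eqF.
rewrite H mulr1 in e.
by rewrite mulrBl mul1r -e addrK.
Qed.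

Lemma holder_ab (a b : R) (g h : V) : 0 < a -> 0 < b -> a^-1 + b^-1 = 1 ->
  expect (fun x => `|g x| * `|h x|) <= pn b g * pn a h.
Proof.
move=> a0 b0 H.
have [A0|A0] := eqVneq (pn b g) 0.
  rewrite A0 mul0r (expect_eq (g := fun _ => 0)) ?expect_cst //.
  by move=> x; rewrite (pn_eq0 b0 A0) normr0 mul0r.
have [B0|B0] := eqVneq (pn a h) 0.
  rewrite B0 mulr0 (expect_eq (g := fun _ => 0)) ?expect_cst //.
  by move=> x; rewrite (pn_eq0 a0 B0) normr0 mulr0.
set A := pn b g in A0 *; set B := pn a h in B0 *.
have Ap : 0 < A by rewrite lt_def A0 pn_ge0.
have Bp : 0 < B by rewrite lt_def B0 pn_ge0.
have XA := pnX g b0; have XB := pnX h a0; rewrite -/A in XA; rewrite -/B in XB.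
clearbody A B.
have key x : `|g x| * `|h x| <= (A * B) * ((powR A b * b)^-1 * powR `|g x| b
                                         + (powR B a * a)^-1 * powR `|h x| a).
  have e1 : `|g x| * `|h x| = (A * B) * ((`|g x| / A) * (`|h x| / B)).
    by field; rewrite A0 B0.
  rewrite e1 ler_pM2l ?mulr_gt0 //.
  have gA : 0 <= `|g x| / A by rewrite divr_ge0 // ltW.
  have hB : 0 <= `|h x| / B by rewrite divr_ge0 // ltW.
  have ba : b^-1 + a^-1 = 1 by rewrite addrC.
  apply: le_trans (@conjugate_powR R (`|g x| / A) (`|h x| / B) b a gA hB b0 a0 ba) _.
  rewrite !powRM ?invr_ge0 //; try exact: ltW.
  rewrite !powRV; try exact: ltW.
  have Ab : powR A b != 0 by rewrite gt_eqF // powR_gt0.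
  have Ba : powR B a != 0 by rewrite gt_eqF // powR_gt0.
  rewrite le_eqVlt; apply/orP; left; apply/eqP; field.
  by rewrite Ab Ba !gt_eqF.
apply: le_trans (expect_le key) _.
rewrite expectZ expectD !expectZ -XA -XB.
have Ab : powR A b != 0 by rewrite gt_eqF // powR_gt0.
have Ba : powR B a != 0 by rewrite gt_eqF // powR_gt0.
have -> : (powR A b * b)^-1 * powR A b + (powR B a * a)^-1 * powR B a = b^-1 + a^-1.
  by field; rewrite Ab Ba !gt_eqF.
by rewrite addrC H mulr1.
Qed.

Lemma witness_ab (a b : R) (h : V) : 0 < a -> 0 < b -> a^-1 + b^-1 = 1 ->
  exists g : V, pn b g <= 1 /\ expect (fun x => g x * h x) = pn a h.
Proof.
move=> a0 b0 H.
have [B0|B0] := eqVneq (pn a h) 0.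
  exists (fun _ => 0); rewrite pn_cst0 // ler01; split => //.
  rewrite B0 (expect_eq (g := fun _ => 0)) ?expect_cst // => x.
  by rewrite mul0r.
set B := pn a h in B0 *.
have Bp : 0 < B by rewrite lt_def B0 pn_ge0.
have e := conj_ab a0 b0 H.
have a1 : a - 1 != 0.
  by apply/eqP => a1; move: e; rewrite a1 mul0r => /esym/eqP; rewrite gt_eqF.
have BA : powR B (a - 1) != 0 by rewrite gt_eqF // powR_gt0.
exists (fun x => Num.sg (h x) * powR `|h x| (a - 1) / powR B (a - 1)); split.
  apply: le_trans (pn_le (g := fun x => powR `|h x| (a - 1) / powR B (a - 1)) b0 _) _.
    move=> x; rewrite normrM normrM normr_sg normfV (ger0_norm (powR_ge0 _ _)).
    rewrite (ger0_norm (powR_ge0 _ _)) [X in _ <= X]ger0_norm ?divr_ge0 ?powR_ge0 //.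
    rewrite ler_pM2r; last by rewrite invr_gt0 powR_gt0.
    have [->|hx] := eqVneq (h x) 0; first by rewrite mul0r powR_ge0.
    by rewrite mul1r.
  rewrite /pn (expect_eq (g := fun x => (powR B a)^-1 * powR `|h x| a)).
    rewrite expectZ -(pnX h a0) -/B mulVf; last by rewrite gt_eqF // powR_gt0.
    by rewrite ?powR1 ?ltr01 ?lexx.
  move=> x; rewrite ger0_norm ?divr_ge0 ?powR_ge0 //.
  rewrite powRM ?invr_ge0 ?powR_ge0 // powRV ?powR_ge0 // -!powRrM e mulrC.
  by [].
rewrite (expect_eq (g := fun x => (powR B (a - 1))^-1 * powR `|h x| a)).
  rewrite expectZ -(pnX h a0) -/B -(mulr_powRB1 (ltW Bp) a0).
  by rewrite mulrC mulfK.
move=> x.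
have -> : Num.sg (h x) * powR `|h x| (a - 1) / powR B (a - 1) * h x =
  (Num.sg (h x) * h x) * powR `|h x| (a - 1) / powR B (a - 1) by ring.
by rewrite -normrEsg mulr_powRB1 // mulrC.
Qed.

Lemma pn1 (h : V) : pn 1 h = expect (fun x => `|h x|).
Proof.
rewrite /pn invr1 powRr1; last by apply: expect_ge0 => x; exact: powR_ge0.
by apply: expect_eq => x; rewrite powRr1.
Qed.

Lemma holder_1 (g h : V) : expect (fun x => g x * h x) <= mn g * pn 1 h.
Proof.
rewrite pn1 -expectZ; apply: expect_le => x.
apply: le_trans (ler_norm _) _; rewrite normrM ler_wpM2r //; exact: mn_ub.
Qed.

Lemma witness_1 (h : V) : exists g : V, mn g <= 1 /\ expect (fun x => g x * h x) = pn 1 h.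
Proof.
exists (fun x => Num.sg (h x)); split.
  apply: bigmax_le => // x _; rewrite normr_sg; by case: (_ != _).
by rewrite pn1; apply: expect_eq => x; rewrite -normrEsg.
Qed.

Lemma witness_oo (g : V) : exists h : V, pn 1 h <= 1 /\ expect (fun x => g x * h x) = mn g.
Proof.
pose x0 := [arg max_(i > [ffun=> false]) `|g i|]%O.
have mx : mn g = `|g x0|.
  by rewrite /mn (bigmax_eq_arg 0 [ffun=> false]) // => i _; exact: normr_ge0.
exists (fun x => if x == x0 then 2 ^+ n * Num.sg (g x0) else 0); split.
  rewrite pn1 /expect (bigD1 x0) //= big1; last by move=> x /negbTE ->; rewrite normr0.
  rewrite eqxx addr0 normrM normr_sg ger0_norm ?exprn_ge0 // mulrC mulrA mulVf.
    by rewrite mul1r; case: (_ != _).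
  by rewrite gt_eqF // pow2_gt0.
rewrite mx /expect (bigD1 x0) //= big1; last by move=> x /negbTE ->; rewrite mulr0.
rewrite eqxx addr0 normrEsg.
have P0 : (2 : R) ^+ n != 0 by rewrite gt_eqF // pow2_gt0.
by field.
Qed.

End Norms.

Section Gen.
Variable R : realType.
Variable n : nat.
Local Notation V := (cube n -> R).

Lemma conj_cases (r : R) : 1 <= r ->
  (r = 1 /\ conj_exp r = +oo%E) \/ (1 < r /\ conj_exp r = (r / (r - 1))%:E).
Proof.
rewrite /conj_exp le_eqVlt => /orP[/eqP <-|r1]; first by left; rewrite eqxx.
by right; rewrite gt_eqF.
Qed.

Lemma conj_pos (r : R) : 1 < r -> 0 < r / (r - 1).
Proof. move=> r1; rewrite divr_gt0 //; [lra | lra]. Qed.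

Lemma conj_inv (r : R) : 1 < r -> r^-1 + (r / (r - 1))^-1 = 1.
Proof.
move=> r1; have r0 : r != 0 by rewrite gt_eqF //; lra.
have r10 : r - 1 != 0 by rewrite gt_eqF //; lra.
by field; rewrite r0 r10.
Qed.

Lemma holder_gen (r : R) (g h : V) : 1 <= r ->
  expect (fun x => g x * h x) <= cube_norm (conj_exp r) g * cube_norm r%:E h.
Proof.
move=> /conj_cases [[-> ->]|[r1 ->]]; first exact: holder_1.
apply: le_trans (expect_le (g := fun x => `|g x| * `|h x|) _) _.
  by move=> x; rewrite -normrM ler_norm.
exact: holder_ab (lt_trans ltr01 r1) (conj_pos r1) (conj_inv r1).
Qed.

Lemma witR_gen (r : R) (h : V) : 1 <= r -> exists g : V,
  cube_norm (conj_exp r) g <= 1 /\ expect (fun x => g x * h x) = cube_norm r%:E h.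
Proof.
move=> /conj_cases [[-> ->]|[r1 ->]]; first exact: witness_1.
exact: witness_ab (lt_trans ltr01 r1) (conj_pos r1) (conj_inv r1).
Qed.

Lemma witS_gen (r : R) (g : V) : 1 <= r -> exists h : V,
  cube_norm r%:E h <= 1 /\ expect (fun x => g x * h x) = cube_norm (conj_exp r) g.
Proof.
move=> /conj_cases [[-> ->]|[r1 ->]]; first exact: witness_oo.
have := witness_ab g (conj_pos r1) (lt_trans ltr01 r1) _.
rewrite addrC conj_inv // => /(_ erefl) [h [h1 e]]; exists h; split => //.
transitivity (pn (r / (r - 1)) g); last by [].
by rewrite -e; apply: expect_eq => x; rewrite mulrC.
Qed.

Lemma ns_ge0 (r : R) (g : V) : 1 <= r -> 0 <= cube_norm (conj_exp r) g.
Proof.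
move=> /conj_cases [[-> ->]|[r1 ->]]; [exact: mn_ge0 | exact: pn_ge0].
Qed.

Lemma nr_ge0 (r : R) (g : V) : 0 <= cube_norm r%:E g.
Proof. exact: pn_ge0. Qed.

Lemma nr_one (r : R) : cube_norm r%:E (fun _ : cube n => 1) = 1.
Proof. exact: pn_cst1. Qed.

Lemma ns_dual (r : R) (g : V) (M : R) : 1 <= r ->
  (forall h : V, cube_norm r%:E h <= 1 -> expect (fun x => g x * h x) <= M) ->
  cube_norm (conj_exp r) g <= M.
Proof.
move=> r1 H; have [h [h1 e]] := witS_gen g r1.
by rewrite -e; apply: H.
Qed.

Lemma ns_holder1 (r : R) (g h : V) : 1 <= r -> cube_norm r%:E h <= 1 ->
  expect (fun x => g x * h x) <= cube_norm (conj_exp r) g.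
Proof.
move=> r1 h1; apply: le_trans (holder_gen g h r1) _.
by rewrite -{2}[cube_norm _ g]mulr1 ler_wpM2l // ns_ge0.
Qed.

Lemma ns_add (r : R) (u v : V) : 1 <= r ->
  cube_norm (conj_exp r) (fun x => u x + v x) <=
  cube_norm (conj_exp r) u + cube_norm (conj_exp r) v.
Proof.
move=> r1; apply: ns_dual => // h h1.
rewrite (expect_eq (g := fun x => u x * h x + v x * h x)); last by move=> x; rewrite mulrDl.
by rewrite expectD lerD // ns_holder1.
Qed.

Lemma ns_scale_le (r : R) (c : R) (u : V) : 1 <= r -> 0 <= c ->
  cube_norm (conj_exp r) (fun x => c * u x) <= c * cube_norm (conj_exp r) u.
Proof.
move=> r1 c0; apply: ns_dual => // h h1.
rewrite (expect_eq (g := fun x => c * (u x * h x))); last by move=> x; rewrite mulrA.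
by rewrite expectZ ler_wpM2l // ns_holder1.
Qed.

Lemma ns_scale (r : R) (c : R) (u : V) : 1 <= r -> 0 < c ->
  cube_norm (conj_exp r) (fun x => c * u x) = c * cube_norm (conj_exp r) u.
Proof.
move=> r1 c0; apply/eqP; rewrite eq_le; apply/andP; split; first by apply: ns_scale_le => //; exact: ltW.
have h1 : 0 <= c^-1 by rewrite invr_ge0 ltW.
have := @ns_scale_le r (c^-1) (fun x => c * u x) r1 h1.
rewrite (_ : (fun x => c^-1 * (c * u x)) = u); last first.
  by apply: funext => x; rewrite mulrA mulVf ?mul1r // gt_eqF.
have cn : c != 0 by rewrite gt_eqF.
by rewrite -(ler_pM2l c0) mulrA mulfV ?mul1r.
Qed.

Lemma ns_zero (r : R) : 1 <= r -> cube_norm (conj_exp r) (fun _ : cube n => 0) = 0.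
Proof.
move=> r1; apply/eqP; rewrite eq_le ns_ge0 // andbT.
apply: ns_dual => // h _.
by rewrite (expect_eq (g := fun _ => 0)) ?expect_cst // => x; rewrite mul0r.
Qed.

End Gen.

Section Dist.
Variable R : realType.
Variable n : nat.
Local Notation V := (cube n -> R).
Local Open Scope classical_set_scope.

Lemma dist_le (r : R) k (f t : V) : 1 <= r -> tail_space k t ->
  dist_tail (conj_exp r) k f <= cube_norm (conj_exp r) (fun x => f x - t x).
Proof.
move=> r1 tt; rewrite /dist_tail.
have H : has_lbound [set cube_norm (conj_exp r) (fun x => f x - g x) | g in @tail_space R k n].
  by exists 0 => y [g _ <-]; exact: ns_ge0.
by apply: (ge_inf H); exists t.
Qed.

Lemma dist_ge (r : R) k (f : V) (a : R) :
  (forall t, tail_space k t -> a <= cube_norm (conj_exp r) (fun x => f x - t x)) ->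
  a <= dist_tail (conj_exp r) k f.
Proof.
move=> H; rewrite /dist_tail; apply: lb_le_inf.
  by exists (cube_norm (conj_exp r) (fun x => f x - 0)), (fun _ => 0) => //; exact: tail0.
by move=> y [g tg <-]; apply: H.
Qed.

Lemma dist_ge0 (r : R) k (f : V) : 1 <= r -> 0 <= dist_tail (conj_exp r) k f.
Proof. by move=> r1; apply: dist_ge => t _; exact: ns_ge0. Qed.

End Dist.

Section HB.
Variable R : realType.
Variable n : nat.
Local Notation V := (cube n -> R).

Definition vlin (c : R) (u v : V) : V := fun x => c * u x + v x.
Definition vzero : V := fun _ => 0.

Definition subsp (W : V -> Prop) :=
  W vzero /\ (forall c u v, W u -> W v -> W (vlin c u v)).
Definition linon (W : V -> Prop) (phi : V -> R) :=
  forall c u v, W u -> W v -> phi (vlin c u v) = c * phi u + phi v.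

Variable rho : V -> R.
Hypothesis rho_add : forall u v, rho (vlin 1 u v) <= rho u + rho v.
Hypothesis rho_scale : forall c u, 0 < c -> rho (vlin c u vzero) = c * rho u.

Definition domon (W : V -> Prop) (phi : V -> R) := forall u, W u -> phi u <= rho u.

Lemma vlin_eq c u v (w : V) : (forall x, c * u x + v x = w x) -> vlin c u v = w.
Proof. by move=> H; apply: funext => x; rewrite /vlin H. Qed.

Lemma linon0 W phi : subsp W -> linon W phi -> phi vzero = 0.
Proof.
move=> [W0 _] L; have := L 1 vzero vzero W0 W0.
rewrite (vlin_eq (w := vzero)); last by move=> x; rewrite /vzero mulr0 addr0.
by move=> H; lra.
Qed.

Lemma linonZ W phi c u : subsp W -> linon W phi -> W u -> phi (vlin c u vzero) = c * phi u.
Proof.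
move=> SW L Wu; rewrite L //; last by case: SW.
by rewrite (linon0 SW L) addr0.
Qed.

Lemma subspZ W c u : subsp W -> W u -> W (vlin c u vzero).
Proof. by move=> [W0 WL] Wu; apply: WL. Qed.

Section Ext1.
Variable W : V -> Prop.
Variable phi : V -> R.
Hypothesis SW : subsp W.
Hypothesis LW : linon W phi.
Hypothesis DW : domon W phi.
Variable v : V.
Hypothesis nWv : ~ W v.
Variable c0 : R.
Hypothesis cond : forall w c, W w -> phi w + c * c0 <= rho (vlin c v w).

Lemma decomp_uniq w1 w2 c1 c2 : W w1 -> W w2 -> vlin c1 v w1 = vlin c2 v w2 ->
  c1 = c2 /\ w1 = w2.
Proof.
move=> W1 W2 E.
have [e|ne] := eqVneq c1 c2.
  subst; split => //; apply: funext => x.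
  have := congr1 (fun f => f x) E; rewrite /vlin => /eqP.
  by rewrite (addrC _ (w1 x)) (addrC _ (w2 x)) -subr_eq addrK => /eqP.
exfalso; apply: nWv.
have -> : v = vlin ((c1 - c2)^-1) (vlin (-1) w1 w2) vzero.
  apply: funext => x; have := congr1 (fun f => f x) E; rewrite /vlin /vzero => Ex.
  have nz : c1 - c2 != 0 by rewrite subr_eq0.
  apply: (mulfI nz); rewrite addr0 mulrA mulfV // mul1r.
  by rewrite mulrBl; move: Ex; lra.
by apply: subspZ => //; case: SW => _; apply.
Qed.

Definition ext_dom (u : V) := exists wc : V * R, W wc.1 /\ u = vlin wc.2 v wc.1.

Definition ext_fun (u : V) : R :=
  match pselect (ext_dom u) with
  | left H => let wc := projT1 (cid H) in phi wc.1 + wc.2 * c0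
  | right _ => 0
  end.

Lemma ext_funE w c : W w -> ext_fun (vlin c v w) = phi w + c * c0.
Proof.
move=> Ww; rewrite /ext_fun; case: pselect => [H|H]; last first.
  by exfalso; apply: H; exists (w, c).
case: (cid H) => [[w' c'] /= [W' E]].
by have [-> ->] := decomp_uniq W' Ww (esym E).
Qed.

Lemma ext_subsp : subsp ext_dom.
Proof.
case: SW => W0 WL; split.
  exists (vzero, 0); split => //=; apply: funext => x; by rewrite /vlin /vzero mul0r addr0.
move=> c u1 u2 [[w1 c1] /= [W1 ->]] [[w2 c2] /= [W2 ->]].
exists (vlin c w1 w2, c * c1 + c2); split => /=; first exact: WL.
by apply: funext => x; rewrite /vlin; ring.
Qed.

Lemma ext_lin : linon ext_dom ext_fun.
Proof.
case: SW => W0 WL.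
move=> c u1 u2 [[w1 c1] /= [W1 ->]] [[w2 c2] /= [W2 ->]].
have -> : vlin c (vlin c1 v w1) (vlin c2 v w2) = vlin (c * c1 + c2) v (vlin c w1 w2).
  by apply: funext => x; rewrite /vlin; ring.
rewrite !ext_funE // ?LW //; [ring | exact: WL].
Qed.

Lemma ext_dom_le : domon ext_dom ext_fun.
Proof.
move=> u [[w c] /= [Ww ->]]; rewrite ext_funE //; exact: cond.
Qed.

Lemma ext_extends u : W u -> ext_dom u /\ ext_fun u = phi u.
Proof.
move=> Wu; have E : u = vlin 0 v u by apply: funext => x; rewrite /vlin mul0r add0r.
split; first by exists (u, 0).
by rewrite {1}E ext_funE // mul0r addr0.
Qed.

Lemma ext_v : ext_dom v /\ ext_fun v = c0.
Proof.
have E : v = vlin 1 v vzero by apply: funext => x; rewrite /vlin /vzero mul1r addr0.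
split; first by exists (vzero, 1); split => //; case: SW.
by rewrite E ext_funE ?(linon0 SW LW) ?add0r ?mul1r //; case: SW.
Qed.

End Ext1.

Lemma ext1 W phi v c0 : subsp W -> linon W phi -> domon W phi ->
  (forall w c, W w -> phi w + c * c0 <= rho (vlin c v w)) ->
  exists W' phi', [/\ subsp W', linon W' phi', domon W' phi',
    (forall u, W u -> W' u /\ phi' u = phi u) & W' v /\ (~ W v -> phi' v = c0)].
Proof.
move=> SW LW DW cond.
case: (pselect (W v)) => Wv.
  by exists W, phi; split => // u Wu.
exists (ext_dom W v), (ext_fun W phi v c0); split.
- exact: ext_subsp.
- exact: ext_lin.
- exact: ext_dom_le.
- exact: ext_extends.
- by split; [case: (ext_v SW LW Wv c0) | move=> _; case: (ext_v SW LW Wv c0)].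
Qed.

Lemma rho0 : rho vzero = 0.
Proof.
have := rho_scale vzero (ltr0Sn _ 1).
rewrite (vlin_eq (w := vzero)); last by move=> x; rewrite /vzero mulr0 addr0.
move=> /eqP; rewrite -subr_eq0 -{1}(mul1r (rho vzero)) -mulrBl mulf_eq0.
by case/orP => /eqP // H; move: H; lra.
Qed.

Lemma c0_exists W phi v : subsp W -> linon W phi -> domon W phi ->
  exists c0, forall w c, W w -> phi w + c * c0 <= rho (vlin c v w).
Proof.
move=> SW LW DW; case: (SW) => W0 WL.
pose S := [set rho (vlin 1 v w) - phi w | w in W]%classic.
have key w w' : W w -> W w' -> phi w' - rho (vlin (-1) v w') <= rho (vlin 1 v w) - phi w.
  move=> Ww Ww'.
  have e1 : phi w + phi w' = phi (vlin 1 w w') by rewrite LW // mul1r.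
  have e2 : vlin 1 w w' = vlin 1 (vlin 1 v w) (vlin (-1) v w').
    by apply: funext => x; rewrite /vlin; ring.
  have := DW _ (WL 1 w w' Ww Ww'); rewrite -e1 e2 => H.
  have := rho_add (vlin 1 v w) (vlin (-1) v w').
  move: H; lra.
have lbS : has_lbound S.
  by exists (phi vzero - rho (vlin (-1) v vzero)) => y [w Ww <-]; apply: key.
have neS : (S !=set0)%classic by exists (rho (vlin 1 v vzero) - phi vzero), vzero.
exists (inf S) => w c Ww.
have Hi w1 : W w1 -> inf S <= rho (vlin 1 v w1) - phi w1.
  by move=> W1; apply: (ge_inf lbS); exists w1.
have Hs w1 : W w1 -> phi w1 - rho (vlin (-1) v w1) <= inf S.
  by move=> W1; apply: lb_le_inf => // y [w2 W2 <-]; apply: key.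
have [c0|c0|->] := ltgtP c 0.
-
  pose s := - c; have s0 : 0 < s by rewrite /s oppr_gt0.
  have Ws : W (vlin s^-1 w vzero) by apply: subspZ.
  have := Hs _ Ws.
  rewrite (linonZ _ SW LW Ww).
  have -> : vlin (-1) v (vlin s^-1 w vzero) = vlin s^-1 (vlin c v w) vzero.
    apply: funext => x; rewrite /vlin /vzero /s; field; by rewrite ?oppr_eq0 lt_eqF.
  rewrite rho_scale ?invr_gt0 // => H.
  have := ler_wpM2l (ltW s0) H.
  rewrite mulrBr !mulrA mulfV ?gt_eqF // !mul1r /s.
  lra.
-
  have Ws : W (vlin c^-1 w vzero) by apply: subspZ.
  have := Hi _ Ws.
  rewrite (linonZ _ SW LW Ww).
  have -> : vlin 1 v (vlin c^-1 w vzero) = vlin c^-1 (vlin c v w) vzero.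
    apply: funext => x; rewrite /vlin /vzero; field; by rewrite gt_eqF.
  rewrite rho_scale ?invr_gt0 // => H.
  have := ler_wpM2l (ltW c0) H.
  rewrite mulrBr !mulrA mulfV ?gt_eqF // !mul1r.
  lra.
- rewrite mul0r addr0.
  have -> : vlin 0 v w = w by apply: funext => x; rewrite /vlin mul0r add0r.
  exact: DW.
Qed.

Lemma ext_list (s : seq (cube n)) (F : cube n -> V) W phi :
  subsp W -> linon W phi -> domon W phi ->
  exists W' phi', [/\ subsp W', linon W' phi', domon W' phi',
    (forall u, W u -> W' u /\ phi' u = phi u) & (forall y, y \in s -> W' (F y))].
Proof.
elim: s W phi => [|y s IH] W phi SW LW DW.
  by exists W, phi; split.
have [c0 Hc] := c0_exists (F y) SW LW DW.
have [W1 [phi1 [S1 L1 D1 E1 [Wy _]]]] := ext1 SW LW DW Hc.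
have [W2 [phi2 [S2 L2 D2 E2 Ws]]] := IH W1 phi1 S1 L1 D1.
exists W2, phi2; split => //.
  move=> u Wu; have [W1u e] := E1 u Wu; have [W2u e2] := E2 u W1u; split => //; by rewrite e2 e.
move=> z; rewrite in_cons => /orP[/eqP ->|zs]; last exact: Ws.
by case: (E2 _ Wy).
Qed.

Definition delta (y : cube n) : V := fun x => (x == y)%:R.

Lemma subsp_sum W (s : seq (cube n)) (c : cube n -> R) (F : cube n -> V) :
  subsp W -> (forall y, y \in s -> W (F y)) ->
  W (fun x => \sum_(y <- s) c y * F y x).
Proof.
move=> [W0 WL]; elim: s => [|y s IH] H.
  by rewrite (_ : (fun x => _) = vzero) //; apply: funext => x; rewrite big_nil.
rewrite (_ : (fun x => _) = vlin (c y) (F y) (fun x => \sum_(y <- s) c y * F y x)).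
  apply: WL; first by apply: H; rewrite mem_head.
  by apply: IH => z zs; apply: H; rewrite in_cons zs orbT.
by apply: funext => x; rewrite big_cons.
Qed.

Lemma linon_sum W phi (s : seq (cube n)) (c : cube n -> R) (F : cube n -> V) :
  subsp W -> linon W phi -> (forall y, y \in s -> W (F y)) ->
  phi (fun x => \sum_(y <- s) c y * F y x) = \sum_(y <- s) c y * phi (F y).
Proof.
move=> SW LW; elim: s => [|y s IH] H.
  by rewrite (_ : (fun x => _) = vzero) ?(linon0 SW LW) ?big_nil //; apply: funext => x; rewrite big_nil.
rewrite (_ : (fun x => _) = vlin (c y) (F y) (fun x => \sum_(y <- s) c y * F y x)).
  rewrite LW ?big_cons ?IH //.
  + by move=> z zs; apply: H; rewrite in_cons zs orbT.
  + by apply: H; rewrite mem_head.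
  apply: subsp_sum => // z zs; apply: H; by rewrite in_cons zs orbT.
by apply: funext => x; rewrite big_cons.
Qed.

Lemma delta_sum (g : V) : (fun x => \sum_(y <- index_enum (cube n)) g y * delta y x) = g.
Proof.
apply: funext => x; rewrite (bigD1 x) //= big1 ?addr0 /delta ?eqxx ?mulr1 //.
by move=> y /negbTE; rewrite eq_sym => ->; rewrite mulr0.
Qed.

Theorem hahn_banach W phi : subsp W -> linon W phi -> domon W phi ->
  exists psi : V -> R, [/\ (forall c u v, psi (vlin c u v) = c * psi u + psi v),
     (forall u, psi u <= rho u) & (forall u, W u -> psi u = phi u)].
Proof.
move=> SW LW DW.
have [W' [psi [S' L' D' E' Hd]]] := ext_list (index_enum (cube n)) delta SW LW DW.
have All u : W' u.
  rewrite -(delta_sum u); apply: subsp_sum => // y _; apply: Hd; exact: mem_index_enum.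
exists psi; split.
- by move=> c u v; apply: L'.
- by move=> u; apply: D'.
- by move=> u Wu; case: (E' u Wu).
Qed.

End HB.

Section Main.
Variable R : realType.
Variable n : nat.
Local Notation V := (cube n -> R).

Lemma dist_one (r : R) k : 1 <= r -> 1 <= dist_tail (conj_exp r) k (fun _ : cube n => 1).
Proof.
move=> r1; apply: dist_ge => t tt.
have := holder_gen (fun x => 1 - t x) (fun _ => 1) r1.
rewrite nr_one mulr1 (expect_eq (g := fun x => 1 - t x)); last by move=> x; rewrite mulr1.
by rewrite expectB expect_cst (tail_expect tt) subr0.
Qed.

Lemma dist_inf_mul (r : R) k (f : V) (a C : R) : 0 <= C ->
  (forall t, tail_space k t -> a <= C * cube_norm (conj_exp r) (fun x => f x - t x)) ->
  a <= C * dist_tail (conj_exp r) k f.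
Proof.
rewrite le_eqVlt => /orP[/eqP <-|C0] H.
  by rewrite mul0r; have := H _ (@tail0 R n k); rewrite mul0r.
rewrite -ler_pdivrMl //; apply: dist_ge => t tt.
by rewrite ler_pdivrMl //; apply: H.
Qed.

Lemma ns_sub0 (r : R) (g : V) :
  cube_norm (conj_exp r) (fun x => g x - 0) = cube_norm (conj_exp r) g.
Proof. by congr cube_norm; apply: funext => x; rewrite subr0. Qed.

Lemma P2_to_P1 (p q : R) k (C : R) : 1 <= p -> p <= q ->
  (forall f : V, dist_tail (conj_exp p) k f <= C * dist_tail (conj_exp q) k f) ->
  forall f : V, degree_le k f -> cube_norm q%:E f <= C * cube_norm p%:E f.
Proof.
move=> p1 pq H f df.
have q1 : 1 <= q by apply: le_trans pq.
have C0 : 0 <= C.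
  have := H (fun _ => 1); have := dist_one k p1.
  have := dist_ge0 k (fun _ : cube n => 1) q1.
  move=> h1 h2 h3; rewrite leNgt; apply/negP => Cn.
  have : C * dist_tail (conj_exp q) k (fun _ : cube n => 1) <= 0.
    by rewrite mulr_le0_ge0 // ltW.
  lra.
have [g [g1 eg]] := witR_gen f q1.
rewrite -eg.
have key : expect (fun x => g x * f x) <= cube_norm p%:E f * dist_tail (conj_exp p) k g.
  apply: dist_inf_mul; first exact: nr_ge0.
  move=> t tt.
  have e : expect (fun x => g x * f x) = expect (fun x => (g x - t x) * f x).
    rewrite (expect_eq (f := fun x => (g x - t x) * f x) (g := fun x => g x * f x - f x * t x)).
      by rewrite expectB (deg_tail_orth df tt) subr0.
    by move=> x; rewrite mulrBl (mulrC (t x)).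
  rewrite e mulrC; exact: holder_gen.
apply: le_trans key _.
rewrite mulrC ler_wpM2r ?nr_ge0 //.
apply: le_trans (H g) _.
rewrite -[X in _ <= X]mulr1 ler_wpM2l //.
apply: le_trans g1.
by rewrite -ns_sub0; apply: dist_le => //; exact: tail0.
Qed.

Lemma P1_to_P2 (p q : R) k (C : R) : 1 <= p -> p <= q ->
  (forall f : V, degree_le k f -> cube_norm q%:E f <= C * cube_norm p%:E f) ->
  forall f : V, dist_tail (conj_exp p) k f <= C * dist_tail (conj_exp q) k f.
Proof.
move=> p1 pq H f.
have q1 : 1 <= q by apply: le_trans pq.
have C0 : 0 <= C.
  have := H _ (@one_deg R n k); rewrite !nr_one mulr1 => C1.
  by apply: le_trans C1.
pose rho := cube_norm (conj_exp p) : V -> R.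
have rho_add u v : rho (vlin 1 u v) <= rho u + rho v.
  rewrite /rho (_ : vlin 1 u v = fun x => u x + v x); first exact: ns_add.
  by apply: funext => x; rewrite /vlin mul1r.
have rho_scale c u : 0 < c -> rho (vlin c u (@vzero R n)) = c * rho u.
  move=> c0; rewrite /rho (_ : vlin c u (@vzero R n) = fun x => c * u x); first exact: ns_scale.
  by apply: funext => x; rewrite /vlin /vzero addr0.
set d := dist_tail (conj_exp p) k f.
have d0 : 0 <= d by apply: dist_ge0.
have SW : subsp (@tail_space R k n).
  split; [exact: tail0 | move=> c u v tu tv; exact: tail_lin].
have LW : linon (@tail_space R k n) (fun _ => 0).
  by move=> c u v _ _; rewrite mulr0 addr0.
have DW : domon rho (@tail_space R k n) (fun _ => 0).
  by move=> u _; exact: ns_ge0.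
have cond : forall w c, tail_space k w -> (fun _ => 0) w + c * d <= rho (vlin c f w).
  move=> w c tw; rewrite add0r.
  have [c0|c0] := leP c 0.
    by apply: le_trans (ns_ge0 _ p1); rewrite mulr_le0_ge0.
  pose T := vlin (- c^-1) w (@vzero R n).
  have tT : tail_space k T by apply: tail_lin => //; exact: tail0.
  have E : vlin c f w = vlin c (fun x => f x - T x) (@vzero R n).
    apply: funext => x; rewrite /vlin /T /vzero /vlin; field; by rewrite gt_eqF.
  rewrite E rho_scale //; apply: ler_wpM2l; first exact: ltW.
  by rewrite /d /rho; apply: dist_le.
have [W1 [phi1 [S1 L1 D1 E1 [W1f Ef]]]] := ext1 SW LW DW cond.
have [psi [Lpsi Dpsi Epsi]] := hahn_banach rho_add rho_scale S1 L1 D1.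
have psi_tail t : tail_space k t -> psi t = 0.
  by move=> tt; have [W1t e] := E1 t tt; rewrite Epsi // e.
have psif : psi f = d.
  case: (pselect (tail_space k f)) => tf; last by rewrite Epsi // Ef.
  rewrite psi_tail //; apply/eqP; rewrite eq_le d0 /=.
  apply: le_trans (dist_le _ p1 tf) _.
  by rewrite (_ : (fun x => f x - f x) = fun _ => 0) ?ns_zero //; apply: funext => x; rewrite subrr.
pose h : V := fun y => 2 ^+ n * psi (@delta R n y).
have STrue : subsp (fun _ : V => True) by [].
have LTrue : linon (fun _ : V => True) psi by move=> c u v _ _; exact: Lpsi.
have Eh g : expect (fun x => g x * h x) = psi g.
  rewrite -{2}(delta_sum g) (@linon_sum R n _ psi (index_enum (cube n)) g (@delta R n) STrue LTrue) //.
  rewrite /expect /h.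
  have P0 : (2 : R) ^+ n != 0 by rewrite gt_eqF // pow2_gt0.
  have -> : \sum_y g y * (2 ^+ n * psi (@delta R n y)) =
           (\sum_y g y * psi (@delta R n y)) * 2 ^+ n.
    by rewrite mulr_suml; apply: eq_bigr => y _; rewrite mulrCA mulrC.
  by rewrite mulfK.
have dh : degree_le k h.
  move=> S hS; rewrite /fourier.
  rewrite (expect_eq (g := fun x => walsh R S x * h x)); last by move=> x; rewrite mulrC.
  by rewrite Eh psi_tail //; exact: walsh_tail.
have h1 : cube_norm p%:E h <= 1.
  have [g [g1 eg]] := witR_gen h p1.
  by rewrite -eg Eh; apply: le_trans (Dpsi g) g1.
apply: dist_inf_mul => // t tt.
have e : d = expect (fun x => (f x - t x) * h x).
  rewrite (expect_eq (g := fun x => f x * h x - h x * t x)); last first.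
    by move=> x; rewrite mulrBl (mulrC (t x)).
  by rewrite expectB (deg_tail_orth dh tt) subr0 Eh.
rewrite e; apply: le_trans (holder_gen _ _ q1) _.
rewrite mulrC; apply: le_trans (ler_wpM2r (ns_ge0 _ q1) (H h dh)) _.
rewrite -mulrA ler_wpM2l //.
rewrite -[X in _ <= X]mul1r ler_wpM2r // ns_ge0 //.
Qed.

End Main.

Lemma least_iff (R : realType) (P Q : R -> Prop) (M : R) :
  (forall C, P C <-> Q C) -> (is_least_const P M <-> is_least_const Q M).
Proof.
move=> H; split => [[PM HP]|[QM HQ]]; split.
- by apply/H.
- by move=> C /H; apply: HP.
- by apply/H.
- by move=> C /H; apply: HQ.
Qed.

Unset Implicit Arguments.

Theorem proposition1p1 (R : realType) (p q : R) (k : nat) :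
  1 <= p -> p <= q ->
  forall M : R,
    is_least_const
      (fun C : R => forall n : nat, (k <= n)%N ->
         forall f : cube n -> R, degree_le k f ->
           cube_norm q%:E f <= C * cube_norm p%:E f) M
    <->
    is_least_const
      (fun C : R => forall n : nat, (k <= n)%N ->
         forall f : cube n -> R,
           dist_tail (conj_exp p) k f <= C * dist_tail (conj_exp q) k f) M.
Proof.
move=> p1 pq M; apply: least_iff => C; split => H n kn.
- exact: P1_to_P2 p1 pq (H n kn).
- exact: P2_to_P1 p1 pq (H n kn).
Qed.
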